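(* Let $f:\mathcal{C}\to\mathcal{D}$ be a morphism of codes. If $\mathcal{C}$ is intersection complete, then $f(\mathcal{C})$ is intersection complete. If $\mathcal{C}$ is max-intersection complete, then $f(\mathcal{C})$ is max-intersection complete.
   Context: A code is a subset $\mathcal{C}\subseteq 2^{[n]}$. For $\sigma\subseteq[n]$, $\mathrm{Tk}_{\mathcal{C}}(\sigma)=\{c\in\mathcal{C}\mid\sigma\subseteq c\}$; a trunk in $\mathcal{C}$ is a subset that is empty or of the form $\mathrm{Tk}_{\mathcal{C}}(\sigma)$. A function $f:\mathcal{C}\to\mathcal{D}$ between codes is a morphism if the preimage of every trunk in $\mathcal{D}$ is a trunk in $\mathcal{C}$. A code is intersection complete if $c_1\cap c_2\in\mathcal{C}$ for all $c_1,c_2\in\mathcal{C}$. A code is max-intersection complete if the intersection of any nonempty collection of maximal (under inclusion) codewords of $\mathcal{C}$ belongs to $\mathcal{C}$. *)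

(* Defs.v *)
From mathcomp Require Import all_boot.
Set Implicit Arguments. Unset Strict Implicit. Unset Printing Implicit Defensive.

Definition trunk_of (n : nat) (C : {set {set 'I_n}}) (sigma : {set 'I_n})
  : {set {set 'I_n}} := [set c in C | sigma \subset c].

Definition is_trunk (n : nat) (C : {set {set 'I_n}}) (T : {set {set 'I_n}}) : Prop :=
  T = set0 \/ exists sigma : {set 'I_n}, T = trunk_of C sigma.

(* f : C -> D is represented by a total function on {set 'I_n} mapping C into D;
   only its values on C matter. *)
Definition maps_into (n m : nat) (C : {set {set 'I_n}}) (D : {set {set 'I_m}})
  (f : {set 'I_n} -> {set 'I_m}) : Prop :=
  forall c, c \in C -> f c \in D.

Definition code_preim (n m : nat) (C : {set {set 'I_n}})
  (f : {set 'I_n} -> {set 'I_m}) (T : {set {set 'I_m}}) : {set {set 'I_n}} :=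
  [set c in C | f c \in T].

Definition is_code_morphism (n m : nat) (C : {set {set 'I_n}}) (D : {set {set 'I_m}})
  (f : {set 'I_n} -> {set 'I_m}) : Prop :=
  maps_into C D f /\
  forall T : {set {set 'I_m}}, T \subset D -> is_trunk D T -> is_trunk C (code_preim C f T).

Definition code_image (n m : nat) (C : {set {set 'I_n}})
  (f : {set 'I_n} -> {set 'I_m}) : {set {set 'I_m}} := f @: C.

Definition intersection_complete (n : nat) (C : {set {set 'I_n}}) : Prop :=
  forall c1 c2, c1 \in C -> c2 \in C -> c1 :&: c2 \in C.

Definition max_codeword (n : nat) (C : {set {set 'I_n}}) (c : {set 'I_n}) : Prop :=
  c \in C /\ forall c', c' \in C -> c \subset c' -> c' = c.

Definition max_intersection_complete (n : nat) (C : {set {set 'I_n}}) : Prop :=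
  forall S : {set {set 'I_n}}, S != set0 ->
    (forall c, c \in S -> max_codeword C c) ->
    \bigcap_(c in S) c \in C.

(* Main.v *)
Require Import Defs.
From mathcomp Require Import all_boot.
Set Implicit Arguments. Unset Strict Implicit. Unset Printing Implicit Defensive.

Section S.
Variables (n m : nat) (C : {set {set 'I_n}}) (D : {set {set 'I_m}})
  (f : {set 'I_n} -> {set 'I_m}).
Hypothesis hf : is_code_morphism C D f.

Lemma up (sigma : {set 'I_m}) (A : {set {set 'I_n}}) (x : {set 'I_n}) :
  A \subset C -> A != set0 -> (forall c, c \in A -> sigma \subset f c) ->
  x \in C -> (forall i, (forall c, c \in A -> i \in c) -> i \in x) ->
  sigma \subset f x.
Proof.
move: hf => [hmap hmor] AC An0 hs xC hx.
have TD : trunk_of D sigma \subset D by apply/subsetP=> d; rewrite inE => /andP[].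
have [|[tau Ht]] := hmor _ TD (or_intror (ex_intro _ sigma erefl)).
  case/set0Pn: An0 => c cA => H.
  have : c \in code_preim C f (trunk_of D sigma).
    rewrite !inE (subsetP AC _ cA) hmap ?(subsetP AC _ cA) //= hs //.
  by rewrite H inE.
have tauA : forall c, c \in A -> tau \subset c.
  move=> c cA.
  have : c \in code_preim C f (trunk_of D sigma).
    rewrite !inE (subsetP AC _ cA) hmap ?(subsetP AC _ cA) //= hs //.
  by rewrite Ht inE => /andP[].
have : x \in code_preim C f (trunk_of D sigma).
  rewrite Ht inE xC /=; apply/subsetP=> i ti; apply: hx => c cA.
  exact: (subsetP (tauA c cA)).
by rewrite !inE => /andP[_ /andP[]].
Qed.

Lemma mono c c' : c \in C -> c' \in C -> c \subset c' -> f c \subset f c'.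
Proof.
move=> cC c'C cc'; apply: (@up _ [set c]).
- by rewrite sub1set.
- by apply/set0Pn; exists c; rewrite inE.
- by move=> c0; rewrite inE => /eqP->.
- done.
- by move=> i H; apply: (subsetP cc'); apply: H; rewrite inE.
Qed.

Definition maxb (c : {set 'I_n}) :=
  [forall c', (c' \in C) ==> (c \subset c') ==> (c' == c)].

Lemma exists_max c : c \in C -> exists c', [/\ c' \in C, c \subset c' & maxb c'].
Proof.
move=> cC.
case: (@arg_maxnP _ c (fun x => (x \in C) && (c \subset x)) (fun x => #|x|)).
  by rewrite cC subxx.
move=> c' /andP[c'C cc'] H; exists c'; split=> //.
apply/forallP=> y; apply/implyP=> yC; apply/implyP=> c'y.
have := H y; rewrite yC (subset_trans cc' c'y) => /(_ isT) le.
by rewrite eq_sym eqEcard c'y; exact: le.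
Qed.
End S.

Theorem theorem1p3 (n m : nat) (C : {set {set 'I_n}}) (D : {set {set 'I_m}})
  (f : {set 'I_n} -> {set 'I_m}) :
  is_code_morphism C D f ->
  (intersection_complete C -> intersection_complete (code_image C f)) /\
  (max_intersection_complete C -> max_intersection_complete (code_image C f)).
Proof.
move=> hf; split.
- move=> hic d1 d2 /imsetP[c1 c1C ->] /imsetP[c2 c2C ->].
  have xC := hic _ _ c1C c2C.
  have -> : f c1 :&: f c2 = f (c1 :&: c2).
    apply/eqP; rewrite eqEsubset; apply/andP; split.
    + apply: (up hf (A := [set c1; c2])).
      * by apply/subsetP=> c; rewrite !inE => /orP[]/eqP->.
      * by apply/set0Pn; exists c1; rewrite !inE eqxx.
      * by move=> c; rewrite !inE => /orP[]/eqP->; rewrite ?subsetIl ?subsetIr.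
      * done.
      * by move=> i H; rewrite inE !H // !inE eqxx ?orbT.
    + by rewrite subsetI !(mono hf) // ?subsetIl ?subsetIr.
  exact: imset_f.
- move=> hmic S Sn0 Smax.
  set S' := [set c in C | maxb C c && (f c \in S)].
  have S'C : S' \subset C by apply/subsetP=> c; rewrite inE => /andP[].
  have pre : forall d, d \in S -> exists2 c', c' \in S' & f c' = d.
    move=> d dS; have [/imsetP[c cC dE] dmax] := Smax d dS; subst d.
    have [c' [c'C cc' mc']] := exists_max cC.
    have e : f c' = f c by apply: dmax; [exact: imset_f | exact: (@mono _ _ C D f hf c c' cC c'C cc')].
    by exists c' => //; rewrite inE c'C mc' e dS.
  have S'n0 : S' != set0.
    by case/set0Pn: Sn0 => d /pre[c' c'S _]; apply/set0Pn; exists c'.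
  have xC : \bigcap_(c in S') c \in C.
    apply: hmic => // c cS; move: cS; rewrite inE => /andP[cC /andP[mc _]].
    split=> // c' c'C cc'; apply/eqP.
    by move/forallP: mc => /(_ c'); rewrite c'C cc'.
  have -> : \bigcap_(d in S) d = f (\bigcap_(c in S') c).
    apply/eqP; rewrite eqEsubset; apply/andP; split.
    + apply: (up hf (A := S')) => //.
      * move=> c; rewrite inE => /and3P[_ _ fcS]; exact: bigcap_inf.
      * by move=> i H; apply/bigcapP.
    + apply/bigcapsP=> d /pre[c' c'S <-]; apply: (mono hf) => //.
      * exact: (subsetP S'C).
      * exact: bigcap_inf.
  exact: imset_f.
Qed.
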